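(* Let $\Gamma$ be a connected finite simple graph on $N\ge3$ vertices whose minimum vertex degree $d$ satisfies $d\ge2$. Then $\varepsilon\le\frac{\sqrt{d-1}}{d}$.
   Context: For a finite simple graph $\Gamma=(V,E)$ without isolated vertices, $\deg v$ is the number of neighbours of $v$ and $\mathcal N(v)=\{w\in V: w\sim v\}$. The normalized Laplacian acts on functions $f:V\to\mathbb R$ by $\Delta f(v)=f(v)-\frac{1}{\deg v}\sum_{w\sim v}f(w)$; its eigenvalues are $0=\lambda_1\le\lambda_2\le\dots\le\lambda_N$, and $\varepsilon:=\min_i|1-\lambda_i|$. $d$ denotes the minimum vertex degree. *)

(* Defs.v *)
From HB Require Import structures.
From mathcomp Require Import all_boot all_order all_algebra.
From mathcomp Require Import reals.
Set Implicit Arguments. Unset Strict Implicit. Unset Printing Implicit Defensive.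
Import Order.TTheory GRing.Theory Num.Theory.
Local Open Scope ring_scope.

Definition simple_graph (T : finType) (adj : rel T) : Prop :=
  symmetric adj /\ irreflexive adj.

Definition connected_graph (T : finType) (adj : rel T) : Prop :=
  forall x y : T, connect adj x y.

Definition deg (T : finType) (adj : rel T) (v : T) : nat := #|[set w | adj v w]|.

(* minimum vertex degree (the index #|T| is an upper bound for every degree) *)
Definition mindeg (T : finType) (adj : rel T) : nat :=
  \big[minn/#|T|]_(v : T) deg adj v.

Definition nlap (R : realType) (T : finType) (adj : rel T) (f : T -> R) (v : T) : R :=
  f v - ((deg adj v)%:R)^-1 * \sum_(w | adj v w) f w.

Definition nlap_eigenvalue (R : realType) (T : finType) (adj : rel T) (lam : R) : Prop :=
  exists f : T -> R, (exists v, f v != 0) /\ forall v, nlap adj f v = lam * f v.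

(* Main.v *)
Require Import Defs.
From HB Require Import structures.
From mathcomp Require Import all_boot all_order all_algebra.
From mathcomp Require Import reals.
From mathcomp Require Import spectral sesquilinear.
From mathcomp Require Import complex.
From mathcomp Require Import ring lra.
Import Order.TTheory GRing.Theory Num.Theory.
Local Open Scope ring_scope.
Local Open Scope sesquilinear_scope.
Lemma real_part (R : realType) (n : nat) (w nu : 'I_n -> R) (c D0 D2 D4 : R) :
  (forall j, 0 <= w j) -> (forall j, nu j ^+ 2 <= 1) ->
  D0 = \sum_j w j -> D2 = \sum_j w j * nu j ^+ 2 -> D4 = \sum_j w j * nu j ^+ 4 ->
  D2 < D0 -> (1 + c) * D2 - c * D0 <= D4 -> exists j, nu j ^+ 2 <= c.
Proof.
move=> w0 nu1 -> -> -> lt20 le4.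
case: (boolP [exists j, nu j ^+ 2 <= c]) => [/existsP //|/existsPn hc].
have hc' j : c < nu j ^+ 2 by rewrite ltNge hc.
pose t j := w j * ((nu j ^+ 2 - 1) * (nu j ^+ 2 - c)).
have tle j : t j <= 0.
  rewrite /t mulr_ge0_le0 // mulr_le0_ge0 // ?subr_le0 ?subr_ge0 ?nu1 //.
  exact: ltW.
have sumt : 0 <= \sum_j t j.
  have -> : \sum_j t j = \sum_j w j * nu j ^+ 4 - (1 + c) * \sum_j w j * nu j ^+ 2
      + c * \sum_j w j.
    rewrite !mulr_sumr -!sumrN -!big_split /=; apply: eq_bigr => j _.
    rewrite /t; ring.
  lra.
have [j hj] : exists j, w j * (nu j ^+ 2 - 1) < 0.
  apply/existsP; apply: contraLR lt20 => /existsPn h.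
  rewrite -leNgt -subr_ge0 -sumrB sumr_ge0 // => j _.
  have := h j; rewrite -leNgt => hh.
  by rewrite mulrBr mulr1 subr_ge0 -subr_ge0 in hh.
have tj : t j < 0.
  rewrite /t mulrA pmulr_llt0 //; first by rewrite subr_gt0.
have : \sum_j t j <= t j.
  rewrite (bigD1 j) //= gerDl sumr_le0 // => i _; exact: tle.
lra.
Qed.

Section Gen.
Variable C : numClosedFieldType.
Lemma diag_entry n (U : 'M[C]_n) (a : 'rV[C]_n) i :
  (U^t* *m diag_mx a *m U) i i = \sum_j a 0 j * ((U j i)^* * U j i)%R.
Proof.
rewrite mul_mx_diag !mxE; apply: eq_bigr => j _; rewrite !mxE; ring.
Qed.

Lemma diag_mul n (U : 'M[C]_n) (a b : 'rV[C]_n) : U *m U^t* = 1%:M ->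
  (U^t* *m diag_mx a *m U) *m (U^t* *m diag_mx b *m U) =
  U^t* *m diag_mx (\row_j (a 0 j * b 0 j)) *m U.
Proof.
move=> hU; rewrite -mulmx_diag.
rewrite !mulmxA; congr (_ *m _); rewrite -!mulmxA; congr (_ *m _).
rewrite !mulmxA; congr (_ *m _).
by rewrite -mulmxA hU mulmx1.
Qed.
End Gen.

Section Spec.
Variable R : realType.
Local Notation C := (R[i] : numClosedFieldType).
Local Notation toC := (real_complex R).

Lemma toC_real (x : R) : (toC x : C) \is Num.real.
Proof. by rewrite complex_real. Qed.

Lemma conj_toC (x : R) : ((toC x : C)^*)%R = toC x.
Proof. by apply: conj_Creal; apply: toC_real. Qed.

Lemma herm_map n (S : 'M[R]_n) : S^T = S -> (map_mx toC S : 'M[C]_n) \is hermsymmx.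
Proof.
move=> hS; apply/is_hermitianmxP; rewrite expr0 scale1r.
apply/matrixP => i j; rewrite !mxE conj_toC.
by rewrite -[in RHS]hS mxE.
Qed.

Lemma spectral_key n (S : 'M[R]_n) (dl : 'I_n -> R) (c : R) :
  S^T = S -> (forall i, 0 <= dl i) ->
  \sum_i dl i * (S *m S) i i < \sum_i dl i ->
  (1 + c) * (\sum_i dl i * (S *m S) i i) - c * \sum_i dl i <=
     \sum_i dl i * ((S *m S) *m (S *m S)) i i ->
  (forall nu, eigenvalue S nu -> nu ^+ 2 <= 1) ->
  exists nu, eigenvalue S nu /\ nu ^+ 2 <= c.
Proof.
move=> hS dl0 h2 h4 hev.
pose Sc : 'M[C]_n := map_mx toC S.
have herm : Sc \is hermsymmx := @herm_map n S hS.
have /orthomx_spectralP hdec := hermitian_normalmx herm.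
set U := spectralmx Sc in hdec. set sp := spectral_diag Sc in hdec.
have Uu : U \is unitarymx := spectral_unitarymx _.
have hU : U *m U^t* = 1%:M by apply/unitarymxP.
rewrite invmx_unitary // in hdec.
have hU' : U^t* *m U = 1%:M by rewrite -invmx_unitary // mulVmx // spectral_unit.
have spr := hermitian_spectral_diag_real herm.
pose nu j := complex.Re (sp 0 j).
have spE j : sp 0 j = toC (nu j).
  have /mxOverP/(_ 0 j) hr := spr.
  by rewrite /nu complexRe; symmetry; apply/Creal_ReP.
pose w j := \sum_i dl i * (complex.Re (U j i) ^+ 2 + complex.Im (U j i) ^+ 2).
have wE j : toC (w j) = \sum_i toC (dl i) * ((U j i)^* * U j i)%R.
  rewrite rmorph_sum; apply: eq_bigr => i _.
  by rewrite rmorphM /= add_Re2_Im2 normCKC.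
have key (a : 'rV[C]_n) : \sum_i toC (dl i) * (U^t* *m diag_mx a *m U) i i
     = \sum_j a 0 j * toC (w j).
  under eq_bigr do rewrite diag_entry mulr_sumr.
  rewrite exchange_big /=; apply: eq_bigr => j _.
  rewrite wE mulr_sumr; apply: eq_bigr => i _; ring.
have hS2 : Sc *m Sc = U^t* *m diag_mx (\row_j (sp 0 j * sp 0 j)) *m U.
  by rewrite {1 2}hdec diag_mul.
have hS4 : (Sc *m Sc) *m (Sc *m Sc) = U^t* *m diag_mx (\row_j
     ((\row_j (sp 0 j * sp 0 j)) 0 j * (\row_j (sp 0 j * sp 0 j)) 0 j)) *m U.
  by rewrite hS2 diag_mul.
have h1 : (1%:M : 'M[C]_n) = U^t* *m diag_mx (const_mx 1) *m U.
  by rewrite diag_const_mx mulmx1.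
have tr (M : 'M[R]_n) (a : 'rV[C]_n) : map_mx toC M = U^t* *m diag_mx a *m U ->
    toC (\sum_i dl i * M i i) = \sum_j a 0 j * toC (w j).
  move=> hM; rewrite -key -hM rmorph_sum; apply: eq_bigr => i _.
  by rewrite rmorphM /= mxE.
have E0 : \sum_i dl i = \sum_j w j.
  apply: complexI.
  have := tr 1%:M (const_mx 1); rewrite map_mx1 => /(_ h1).
  under eq_bigr do rewrite mxE eqxx mulr1n mulr1.
  move=> ->; rewrite rmorph_sum; apply: eq_bigr => j _; rewrite mxE mul1r.
  done.
have E2 : \sum_i dl i * (S *m S) i i = \sum_j w j * nu j ^+ 2.
  apply: complexI.
  rewrite (tr (S *m S) (\row_j (sp 0 j * sp 0 j))); last by rewrite map_mxM.
  rewrite rmorph_sum; apply: eq_bigr => j _; rewrite mxE !spE rmorphM rmorphXn /=.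
  ring.
have E4 : \sum_i dl i * ((S *m S) *m (S *m S)) i i = \sum_j w j * nu j ^+ 4.
  apply: complexI.
  rewrite (tr _ (\row_j ((\row_j (sp 0 j * sp 0 j)) 0 j * (\row_j (sp 0 j * sp 0 j)) 0 j))); last by rewrite !map_mxM.
  rewrite rmorph_sum; apply: eq_bigr => j _; rewrite !mxE !spE rmorphM rmorphXn /=.
  ring.
have eig j : eigenvalue S (nu j).
  have hUS : U *m Sc = diag_mx sp *m U by rewrite hdec !mulmxA hU mul1mx.
  have erow : row j U *m Sc = sp 0 j *: row j U.
    rewrite -row_mul hUS; apply/rowP => k; rewrite !mxE.
    rewrite (bigD1 j) //= big1 ?addr0; first by rewrite mxE eqxx mulr1n.
    by move=> i /negbTE hij; rewrite mxE eq_sym hij mulr0n mul0r.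
  have nz : row j U != 0.
    apply/eqP => h0; move: hU => /matrixP/(_ j j); rewrite !mxE eqxx big1 //.
      by move=> /esym/eqP; rewrite oner_eq0.
    move=> k _; move/rowP/(_ k): h0; rewrite !mxE => ->.
    by rewrite mul0r.
  have ec : eigenvalue Sc (sp 0 j) by apply/eigenvalueP; exists (row j U).
  rewrite eigenvalue_root_char -(fmorph_root toC) map_char_poly
    -eigenvalue_root_char.
  by move: ec; rewrite spE.
have w0 j : 0 <= w j.
  by apply: sumr_ge0 => i _; apply: mulr_ge0 => //; apply: addr_ge0; apply: sqr_ge0.
have [j hj] := @real_part R n w nu c _ _ _ w0 (fun j => hev _ (eig j)) E0 E2 E4 h2 h4.
by exists (nu j).
Qed.
End Spec.
Section Key.
Variable R : realType.

Lemma sum_sq_le (I : finType) (u : I -> R) : (forall k, 0 <= u k) ->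
  \sum_k u k ^+ 2 <= (\sum_k u k) ^+ 2.
Proof.
move=> u0; rewrite expr2 mulr_suml; apply: ler_sum => k _.
rewrite expr2 ler_wpM2l //.
by rewrite (bigD1 k) //= lerDl sumr_ge0.
Qed.

Lemma key_ineq (I : finType) (a x : I -> R) (d K s : R) :
  (forall k, a k * a k = a k) -> (forall k, 0 <= a k) ->
  (forall k, 0 <= x k) -> (forall k, d * x k <= 1) -> 2 <= d ->
  K = \sum_k a k -> s = \sum_k a k * x k -> 1 <= K ->
  K * s - (d - 1) / d ^+ 2 * K * (K - 1) <= s ^+ 2 + \sum_k a k * (x k - x k ^+ 2).
Proof.
move=> a2 a0 x0 xd d2 hK hs K1.
pose q := \sum_k a k * x k ^+ 2.
have hW : \sum_k a k * (1 - d * x k) = K - d * s.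
  rewrite hK hs mulr_sumr -sumrB; apply: eq_bigr => k _; ring.
have hO : \sum_k a k * (1 - d * x k) ^+ 2 = K - 2 * d * s + d ^+ 2 * q.
  rewrite hK hs /q !mulr_sumr -sumrB -big_split /=; apply: eq_bigr => k _; ring.
have W0 : 0 <= K - d * s.
  by rewrite -hW sumr_ge0 // => k _; rewrite mulr_ge0 // subr_ge0.
have WO : K - 2 * d * s + d ^+ 2 * q <= (K - d * s) ^+ 2.
  rewrite -hW -hO.
  have h := @sum_sq_le I (fun k => a k * (1 - d * x k)) 
    (fun k => mulr_ge0 (a0 k) (eq_ind_r _ (xd k) (subr_ge0 _ _))).
  apply: le_trans h; rewrite le_eqVlt; apply/orP; left; apply/eqP.
  by apply: eq_bigr => k _; rewrite exprMn [a k ^+ 2]expr2 a2.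
have hq : \sum_k a k * (x k - x k ^+ 2) = s - q.
  rewrite hs /q -sumrB; apply: eq_bigr => k _; ring.
rewrite hq.
have dpos : 0 < d by lra.
have dn0 : d != 0 by rewrite gt_eqF.
rewrite -subr_ge0.
have -> : s ^+ 2 + (s - q) - (K * s - (d - 1) / d ^+ 2 * K * (K - 1)) =
   ((K - d * s) ^+ 2 - (K - 2 * d * s + d ^+ 2 * q) + (d - 2) * (K - 1) * (K - d * s)) / d ^+ 2.
  by field.
apply: divr_ge0; last by rewrite sqr_ge0.
apply: addr_ge0; first by rewrite subr_ge0.
apply: mulr_ge0 => //; apply: mulr_ge0; lra.
Qed.
End Key.
Section Graph.
Variable R : realType.
Variable n : nat.
Variable a : 'I_n -> 'I_n -> R.
Variable d : R.
Hypothesis asym : forall i j, a i j = a j i.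
Hypothesis a2 : forall i j, a i j * a i j = a i j.
Hypothesis a0 : forall i j, 0 <= a i j.
Hypothesis d2 : 2 <= d.
Definition dg i := \sum_j a i j.
Hypothesis dmin : forall i, d <= dg i.
Definition xx i := (dg i)^-1.
Definition rr i := Num.sqrt (dg i).
Definition SS : 'M[R]_n := \matrix_(i, j) (a i j / (rr i * rr j)).
Definition YY i j := \sum_k a i k * a k j * xx k.

Lemma dg_pos i : 0 < dg i.
Proof. have := d2; have := dmin i; lra. Qed.
Lemma rr_pos i : 0 < rr i.
Proof. by rewrite /rr sqrtr_gt0 dg_pos. Qed.
Lemma rr_sq i : rr i ^+ 2 = dg i.
Proof. by rewrite /rr sqr_sqrtr // ltW // dg_pos. Qed.
Lemma xx_dg i : xx i * dg i = 1.
Proof. by rewrite /xx mulVf // gt_eqF // dg_pos. Qed.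

Lemma SS_sym : SS^T = SS.
Proof. by apply/matrixP => i j; rewrite !mxE asym [rr j * _]mulrC. Qed.

Lemma SS2E i j : (SS *m SS) i j = YY i j / (rr i * rr j).
Proof.
rewrite !mxE /YY mulr_suml; apply: eq_bigr => k _; rewrite !mxE.
have hi := rr_pos i; have hj := rr_pos j; have hk := rr_pos k.
rewrite /xx -rr_sq; field.
by rewrite !gt_eqF.
Qed.

Lemma YY_sym i j : YY i j = YY j i.
Proof. by rewrite /YY; apply: eq_bigr => k _; rewrite (asym i k) (asym k j); ring. Qed.

Lemma sum_col_xx : \sum_i \sum_k a i k * xx k = n%:R.
Proof.
rewrite exchange_big /=.
rewrite -[n in n%:R]card_ord -sumr_const; apply: eq_bigr => k _.
rewrite -mulr_suml -(xx_dg k) mulrC /dg; congr (_ * _).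
by apply: eq_bigr => i _; rewrite asym.
Qed.

Lemma trace2 : \sum_i dg i * (SS *m SS) i i = n%:R.
Proof.
rewrite -sum_col_xx; apply: eq_bigr => i _.
rewrite SS2E /YY -expr2 rr_sq mulrC mulfVK; last by rewrite gt_eqF // dg_pos.
by apply: eq_bigr => k _; rewrite -(asym i k) a2.
Qed.

Lemma trace4 : \sum_i dg i * ((SS *m SS) *m (SS *m SS)) i i =
   \sum_j xx j * \sum_i YY i j ^+ 2.
Proof.
under [RHS]eq_bigr do rewrite mulr_sumr.
rewrite [RHS]exchange_big /=; apply: eq_bigr => i _.
rewrite mxE mulr_sumr; apply: eq_bigr => j _.
rewrite !SS2E (YY_sym j i).
have hi := rr_pos i; have hj := rr_pos j.
rewrite /xx -!rr_sq; field.
by rewrite !gt_eqF.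
Qed.

Lemma Bbound j k l : a j k * a j l + (k == l)%:R * (dg k - a j k) <=
  \sum_i a i k * a i l.
Proof.
case: (eqVneq k l) => [<-|hkl].
  rewrite mul1r a2 addrC subrK /dg le_eqVlt; apply/orP; left; apply/eqP.
  by apply: eq_bigr => i _; rewrite a2 asym.
rewrite mul0r addr0 (bigD1 j) //= lerDl sumr_ge0 // => i _.
exact: mulr_ge0.
Qed.

Lemma comb j : (\sum_k a j k * xx k) ^+ 2 + \sum_k a j k * (xx k - xx k ^+ 2)
   <= \sum_i YY i j ^+ 2.
Proof.
pose u k := a j k * xx k.
have u0 k : 0 <= u k by rewrite mulr_ge0 // /xx invr_ge0 ltW // dg_pos.
have e1 : \sum_i YY i j ^+ 2 =
   \sum_k \sum_l u k * u l * \sum_i a i k * a i l.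
  have -> : \sum_i YY i j ^+ 2 = \sum_i \sum_k \sum_l (a i k * u k) * (a i l * u l).
    apply: eq_bigr => i _.
    have yE : YY i j = \sum_k a i k * u k.
      by rewrite /YY; apply: eq_bigr => k _; rewrite /u (asym k j); ring.
    by rewrite yE expr2 big_distrlr.
  rewrite exchange_big /=; apply: eq_bigr => k _.
  rewrite exchange_big /=; apply: eq_bigr => l _.
  rewrite mulr_sumr; apply: eq_bigr => i _; ring.
rewrite e1.
apply: le_trans (_ : \sum_k \sum_l u k * u l *
    (a j k * a j l + (k == l)%:R * (dg k - a j k)) <= _); last first.
  apply: ler_sum => k _; apply: ler_sum => l _; apply: ler_wpM2l.
    exact: mulr_ge0.
  exact: Bbound.
have -> : \sum_k \sum_l u k * u l * (a j k * a j l + (k == l)%:R * (dg k - a j k)) =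
  \sum_k \sum_l u k * u l * (a j k * a j l) +
  \sum_k \sum_l u k * u l * ((k == l)%:R * (dg k - a j k)).
  rewrite -big_split; apply: eq_bigr => k _; rewrite -big_split; apply: eq_bigr => l _.
  by rewrite mulrDr.
apply: lerD.
  rewrite le_eqVlt; apply/orP; left; apply/eqP.
  rewrite expr2 big_distrlr /=; apply: eq_bigr => k _; apply: eq_bigr => l _.
  rewrite /u; transitivity ((a j k * a j k) * (a j l * a j l) * xx k * xx l).
    by rewrite !a2; ring.
  ring.
rewrite le_eqVlt; apply/orP; left; apply/eqP.
apply: eq_bigr => k _.
rewrite (bigD1 k) //= big1 ?addr0; last first.
  by move=> l /negbTE hl; rewrite eq_sym hl mul0r mulr0.
rewrite eqxx mul1r /u.
have hx : xx k ^+ 2 * dg k = xx k by rewrite expr2 -mulrA xx_dg mulr1.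
have := a2 j k; move: hx; set A := a j k; set X := xx k; set D := dg k => hx hA.
symmetry; transitivity (A * A * (X ^+ 2 * D) - A * A * A * X ^+ 2); first by ring.
by rewrite !hA hx; ring.
Qed.

Lemma xx_ge0 k : 0 <= xx k.
Proof. by rewrite /xx invr_ge0 ltW // dg_pos. Qed.

Lemma trace4_ge : (1 + (d - 1) / d ^+ 2) * n%:R - (d - 1) / d ^+ 2 * \sum_i dg i
   <= \sum_i dg i * ((SS *m SS) *m (SS *m SS)) i i.
Proof.
set c := (d - 1) / d ^+ 2.
rewrite trace4.
have hs : \sum_j (\sum_k a j k * xx k - c * (dg j - 1))
    = n%:R - c * \sum_i dg i + c * n%:R.
  rewrite sumrB sum_col_xx -mulr_sumr sumrB sumr_const card_ord.
  rewrite -[1 *+ n]/(n%:R); ring.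
have -> : (1 + c) * n%:R - c * \sum_i dg i = n%:R - c * \sum_i dg i + c * n%:R by ring.
rewrite -hs; apply: ler_sum => j _.
have hk := @key_ineq R _ (a j) xx d (dg j) (\sum_k a j k * xx k) (a2 j) (a0 j) xx_ge0.
have := comb j.
have xd k : d * xx k <= 1.
  by rewrite -(xx_dg k) mulrC ler_wpM2l // xx_ge0.
have K1 : 1 <= dg j by have := dmin j; have := d2; lra.
have := hk xd d2 erefl erefl K1.
move=> h1 h2.
have := xx_dg j; have := xx_ge0 j.
set X := xx j; set K := dg j; set s := \sum_k _ => X0 XK.
rewrite -/c in h1.
have : X * (K * s - c * K * (K - 1)) <= X * \sum_i YY i j ^+ 2.
  by rewrite ler_wpM2l //; apply: le_trans h2.
suff -> : X * (K * s - c * K * (K - 1)) = s - c * (K - 1) by [].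
transitivity ((X * K) * s - c * (X * K) * (K - 1)); first by ring.
by rewrite XK; ring.
Qed.

Lemma eig_eq nu (v : 'rV[R]_n) : v *m SS = nu *: v ->
  forall j, \sum_i a j i * (v 0 i / rr i) = nu * dg j * (v 0 j / rr j).
Proof.
move=> hv j.
have hj := rr_pos j.
transitivity (rr j * (v *m SS) 0 j).
  rewrite mxE mulr_sumr; apply: eq_bigr => i _; rewrite mxE (asym j i).
  have hi := rr_pos i.
  by field; rewrite !gt_eqF.
rewrite hv mxE -rr_sq; field.
by rewrite gt_eqF.
Qed.

Lemma eig_bound nu : eigenvalue SS nu -> nu ^+ 2 <= 1.
Proof.
move/eigenvalueP => [v hv nz].
have [i0 hi0] : exists i0, v 0 i0 != 0.
  apply/existsP; apply: contraNT nz => /existsPn h.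
  by apply/eqP/rowP => i; rewrite mxE; apply/eqP; rewrite -[_ == _]negbK h.
pose f i := v 0 i / rr i.
have he := @eig_eq nu v hv.
case: (@arg_maxP _ _ _ i0 predT (fun j => `|f j|) erefl) => j _ hm.
have fj : 0 < `|f j|.
  apply: lt_le_trans (hm i0 erefl).
  by rewrite normr_gt0 /f mulf_neq0 // invr_eq0 gt_eqF // rr_pos.
have hdj := dg_pos j.
have : `|nu| * (dg j * `|f j|) <= 1 * (dg j * `|f j|).
  rewrite mul1r.
  have -> : `|nu| * (dg j * `|f j|) = `|\sum_i a j i * f i|.
    by rewrite he !normrM (ger0_norm (ltW hdj)); ring.
  apply: le_trans (ler_norm_sum _ _ _) _.
  rewrite /dg mulr_suml; apply: ler_sum => i _.
  rewrite normrM (ger0_norm (a0 j i)) ler_wpM2l //; exact: hm.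
rewrite ler_pM2r ?mulr_gt0 // => hn.
by move: hn; rewrite ler_norml => /andP [h1 h2]; nra.
Qed.

Lemma graph_main : (0 < n)%N -> exists nu (f : 'I_n -> R), (exists k, f k != 0) /\
  (forall j, \sum_i a j i * f i = nu * dg j * f j) /\ nu ^+ 2 <= (d - 1) / d ^+ 2.
Proof.
move=> n0.
have [nu [hnu hc]] : exists nu, eigenvalue SS nu /\ nu ^+ 2 <= (d - 1) / d ^+ 2.
  apply: (@spectral_key R n SS dg).
  - exact: SS_sym.
  - by move=> i; apply: ltW; apply: dg_pos.
  - rewrite trace2.
    have : \sum_(i < n) (2 : R) <= \sum_i dg i.
      by apply: ler_sum => i _; have := dmin i; have := d2; lra.
    rewrite sumr_const card_ord => h.
    apply: lt_le_trans h.
    rewrite -[n%:R]mulr1n -mulr_natr -[2 *+ n]mulr_natr.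
    have : (0 : R) < n%:R by rewrite ltr0n.
    lra.
  - rewrite trace2; exact: trace4_ge.
  - exact: eig_bound.
move/eigenvalueP: hnu => [v hv nz].
exists nu, (fun i => v 0 i / rr i); split; last split => //.
  have [i0 hi0] : exists i0, v 0 i0 != 0.
    apply/existsP; apply: contraNT nz => /existsPn h.
    by apply/eqP/rowP => i; rewrite mxE; apply/eqP; rewrite -[_ == _]negbK h.
  by exists i0; rewrite mulf_neq0 // invr_eq0 gt_eqF // rr_pos.
exact: (@eig_eq nu v hv).
Qed.
End Graph.

Local Close Scope sesquilinear_scope.

Lemma sum_T (R : realType) (T : finType) (F : T -> R) :
  \sum_(x : T) F x = \sum_(j < #|T|) F (enum_val j).
Proof. by rewrite -(big_enum_val (A := T)); apply: eq_bigl => x; rewrite inE. Qed.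

Lemma degE (R : realType) (T : finType) (adj : rel T) v :
  ((deg adj v)%:R : R) = \sum_(j < #|T|) ((adj v (enum_val j))%:R : R).
Proof.
rewrite -(@sum_T R T (fun x => ((adj v x)%:R : R))) /deg -sum1dep_card natr_sum big_mkcond /=.
by apply: eq_bigr => x _; case: (adj v x).
Qed.

Lemma mindeg_le (T : finType) (adj : rel T) v : (mindeg adj <= deg adj v)%N.
Proof. by rewrite /mindeg -minEnat; apply: (bigmin_le (T := nat)). Qed.

Theorem mainTheorem4 (R : realType) (T : finType) (adj : rel T) :
  simple_graph adj -> connected_graph adj -> (3 <= #|T|)%N ->
  (2 <= mindeg adj)%N ->
  exists lam : R, nlap_eigenvalue adj lam /\
    `|1 - lam| <= Num.sqrt ((mindeg adj)%:R - 1) / (mindeg adj)%:R.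
Proof.
move=> [sym _] _ hN hd.
pose a (i j : 'I_#|T|) : R := (adj (enum_val i) (enum_val j))%:R.
pose d : R := (mindeg adj)%:R.
have asym i j : a i j = a j i by rewrite /a sym.
have a2 i j : a i j * a i j = a i j by rewrite /a; case: (adj _ _); rewrite ?mulr1 ?mulr0.
have a0 i j : 0 <= a i j by rewrite /a ler0n.
have d2 : 2 <= d by rewrite /d ler_nat.
have dgE i : @dg R _ a i = (deg adj (enum_val i))%:R by rewrite /dg degE.
have dmin i : d <= @dg R _ a i by rewrite dgE ler_nat mindeg_le.
have n0 : (0 < #|T|)%N by apply: leq_trans hN.
have [nu [f [[k hk] [heq hc]]]] := @graph_main R _ a d asym a2 a0 d2 dmin n0.
exists (1 - nu); split.
  exists (fun t => f (enum_rank t)); split.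
    by exists (enum_val k); rewrite enum_valK.
  move=> v; rewrite /nlap.
  have := heq (enum_rank v); rewrite dgE enum_rankK => he.
  have -> : \sum_(w | adj v w) f (enum_rank w) = \sum_j a (enum_rank v) j * f j.
    rewrite big_mkcond /= (@sum_T R T (fun w => if adj v w then f (enum_rank w) else 0)).
    apply: eq_bigr => j _; rewrite /a enum_rankK enum_valK.
    by case: (adj v (enum_val j)); rewrite ?mul1r ?mul0r.
  rewrite he.
  have : (0 < deg adj v)%N := leq_trans (ltnW hd) (@mindeg_le T adj v).
  rewrite -(ltr0n R) => hdp.
  by field; rewrite gt_eqF.
rewrite opprB addrC subrK.
have dp : 0 < d by lra.
rewrite ler_pdivlMr //.
have e : `|nu| * d = `|nu * d| by rewrite normrM (ger0_norm (ltW dp)).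
rewrite -/d e -sqrtr_sqr ler_sqrt; last by lra.
rewrite exprMn.
have d2p : 0 < d ^+ 2 by rewrite exprn_gt0.
move: hc; rewrite ler_pdivlMr //.
Qed.
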